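(* In the setting of the Pairwise Learning algorithm described in the context, suppose that every $1$-dimensional reduced graph of $G$ contains exactly one source component and that for every $\theta\neq\theta^*$ and every $1$-dimensional reduced graph $\mathcal{H}_1$ with source component $\mathcal{S}_{\mathcal{H}_1}$, $\sum_{j\in\mathcal{S}_{\mathcal{H}_1}}D(\ell_j(\cdot\mid\theta^* )\|\ell_j(\cdot\mid\theta))\neq0$. Let $i$ be a non-faulty agent. If there exists $\tilde\theta\in\Theta$ such that for every $\theta\neq\tilde\theta$, $r_t^i(\tilde\theta,\theta)\to+\infty$ almost surely and $r_t^i(\theta,\tilde\theta)\to-\infty$ almost surely, then $\tilde\theta=\theta^*$.
   Context: Network: $n$ agents on a directed graph $G=(\mathcal{V},\mathcal{E})$, $\mathcal{V}=\{1,\dots,n\}$, $\mathcal{I}_i$ the incoming neighbors of $i$; synchronous iterations; an unknown set of at most $f$ Byzantine agents behaving arbitrarily; non-faulty agents know $f$; missing messages are replaced by a default value. Observations: $\Theta=\{\theta_1,\dots,\theta_m\}$ with unknown true state $\theta^*$; agent $i$ has finite signal space $\mathcal{S}_i$ and likelihoods $\ell_i(\cdot\mid\theta)$ with full support; in iteration $t$ it observes $s_t^i\sim\ell_i(\cdot\mid\theta^* )$, independently across agents and iterations; $\ell_i(s_{1,t}^i\mid\theta)=\prod_{r=1}^t\ell_i(s_r^i\mid\theta)$. $D$ is the Kullback–Leibler divergence. A $1$-dimensional reduced graph of $G$ is obtained by removing all faulty nodes and incident links and then, for each non-faulty node, up to $f$ additional incoming links; a source component is a strongly connected component with no incoming links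 from outside. Pairwise Learning at non-faulty agent $i$: $r_0^i(\theta_1,\theta_2)=0$ for all ordered pairs $\theta_1\ne\theta_2$; in iteration $t\ge1$, for each ordered pair, transmit $r_{t-1}^i(\theta_1,\theta_2)$, observe $s_t^i$, receive $\tilde r_{t-1}^j(\theta_1,\theta_2)$ from all $j\in\mathcal{I}_i$, discard the $f$ smallest and $f$ largest received values (remaining index set $\mathcal{I}_i^*[t]$), and set $r_t^i(\theta_1,\theta_2)=\frac{\sum_{j\in\mathcal{I}_i^*[t]}\tilde r_{t-1}^j(\theta_1,\theta_2)+r_{t-1}^i(\theta_1,\theta_2)}{|\mathcal{I}_i^*[t]|+1}+\log\frac{\ell_i(s_{1,t}^i\mid\theta_1)}{\ell_i(s_{1,t}^i\mid\theta_2)}$. *)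

(* Defs.v *)
From HB Require Import structures.
From mathcomp Require Import all_boot all_order all_algebra.
From mathcomp Require Import all_classical all_reals all_analysis.
Set Implicit Arguments. Unset Strict Implicit. Unset Printing Implicit Defensive.
Import Order.TTheory GRing.Theory Num.Theory.
Import numFieldNormedType.Exports.
Local Open Scope classical_set_scope.
Local Open Scope ring_scope.

(* Incoming neighbours of agent i in the directed graph G (edge j -> i is G j i);
   self-loops are ignored. *)
Definition in_nbrs (n : nat) (G : rel 'I_n) (i : 'I_n) : {set 'I_n} :=
  finset (fun j => G j i && (j != i)).

Definition reduced_graph (n f : nat) (G : rel 'I_n) (F : {set 'I_n})
    (H : rel 'I_n) : Prop :=
  (forall j k, H j k -> [&& G j k, j != k, j \notin F & k \notin F]) /\
  (forall k, k \notin F ->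
     (#|finset (fun j => [&& G j k, j != k, j \notin F & ~~ H j k])| <= f)%N).

(* Sc is a source component of the reduced graph H (vertex set V \ F):
   a strongly connected component with no incoming link from outside. *)
Definition source_component (n : nat) (F : {set 'I_n}) (H : rel 'I_n)
    (Sc : {set 'I_n}) : Prop :=
  (exists2 j, j \notin F &
     Sc = finset (fun k => [&& k \notin F, connect H j k & connect H k j])) /\
  (forall j k, k \in Sc -> H j k -> j \in Sc).

Definition KL (R : realType) (T : finType) (p q : T -> R) : R :=
  \sum_(x : T) p x * ln (p x / q x).

Definition likelihoods (R : realType) (n : nat) (Theta : finType)
    (S : 'I_n -> finType) (l : forall i, S i -> Theta -> R) : Prop :=
  forall i th, (forall x, 0 < l i x th) /\ \sum_(x : S i) l i x th = 1.

(* Signals: s t i is the signal of agent i in iteration t (t >= 1).  They are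
   measurable and their joint law is the product law
   prod_{t,i} l_i(. | theta_star) (independence across agents and iterations). *)
Definition signal_model (R : realType) (d : measure_display)
    (Omega : measurableType d) (P : probability Omega R) (n : nat)
    (Theta : finType) (thstar : Theta) (S : 'I_n -> finType)
    (l : forall i, S i -> Theta -> R) (s : nat -> forall i, Omega -> S i) : Prop :=
  (forall t i x, measurable [set w | s t i w = x]) /\
  (forall (T : nat) (a : nat -> forall i, S i),
     P [set w | forall t, (1 <= t <= T)%N -> forall i, s t i w = a t i] =
     (\prod_(1 <= t < T.+1) \prod_(i < n) l i (a t i) thstar)%:E).

Definition trimmed (R : realType) (f : nat) (vals : seq R) : seq R :=
  drop f (take (size vals - f) (sort <=%R vals)).

Definition cumloglik (R : realType) (Omega : Type) (n : nat) (Theta : finType)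
    (S : 'I_n -> finType) (l : forall i, S i -> Theta -> R)
    (s : nat -> forall i, Omega -> S i) (i : 'I_n) (t : nat) (a b : Theta)
    (w : Omega) : R :=
  ln ((\prod_(1 <= r < t.+1) l i (s r i w) a) /
      (\prod_(1 <= r < t.+1) l i (s r i w) b)).

(* PL t i a b w = r^i_t(a, b) at outcome w.
   adv t j i a b w is the (arbitrary) value tilde r^j_t(a,b) that a faulty agent
   j sends to i in iteration t+1; non-faulty agents send their true state. *)
Fixpoint PL (R : realType) (Omega : Type) (n f : nat) (G : rel 'I_n)
    (F : {set 'I_n}) (Theta : finType) (S : 'I_n -> finType)
    (l : forall i, S i -> Theta -> R) (s : nat -> forall i, Omega -> S i)
    (adv : nat -> 'I_n -> 'I_n -> Theta -> Theta -> Omega -> R)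
    (t : nat) : 'I_n -> Theta -> Theta -> Omega -> R :=
  if t is t'.+1 then fun i a b w =>
    let vals := [seq (if j \in F then adv t' j i a b w
                      else PL f G F l s adv t' j a b w) | j <- enum (in_nbrs G i)] in
    let mid := trimmed f vals in
    (\sum_(x <- mid) x + PL f G F l s adv t' i a b w) / ((size mid)%:R + 1)
    + cumloglik l s i t a b w
  else fun _ _ _ _ => 0.

(* Main.v *)
Require Import Defs.
From HB Require Import structures.
From mathcomp Require Import all_boot all_order all_algebra.
From mathcomp Require Import all_classical all_reals all_analysis.
From mathcomp Require Import ring lra.
Import Order.TTheory GRing.Theory Num.Theory.
Import numFieldNormedType.Exports.
Local Open Scope classical_set_scope.
Local Open Scope ring_scope.

Lemma trimmed_lb (R : realType) f (vals : seq R) (c : R) :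
  (count (fun x => (x < c)%R) vals <= f)%N -> forall x, x \in trimmed f vals -> c <= x.
Proof.
move=> Hc x; rewrite /trimmed => Hx.
set u := take _ _ in Hx.
have su : sorted <=%R u by apply: take_sorted; apply: sort_sorted; exact: le_total.
have Hsz : (f < size u)%N.
  have : (0 < size (drop f u))%N by case: (drop f u) Hx.
  by rewrite size_drop subn_gt0.
rewrite leNgt; apply/negP => xc.
have H1 : (f < count (fun y => (y < c)%R) u)%N.
  rewrite -(cat_take_drop f u) count_cat.
  have : pairwise <=%R (take f u ++ drop f u).
    by rewrite cat_take_drop -sorted_pairwise //; exact: le_trans.
  rewrite pairwise_cat => /and3P[/allrelP Hal _ _].
  have -> : count (fun y => (y < c)%R) (take f u) = f.
    have : all (fun y => (y < c)%R) (take f u).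
      by apply/allP => y Hy; exact: le_lt_trans (Hal y x Hy Hx) xc.
    by rewrite all_count size_take Hsz => /eqP.
  rewrite -[X in (X < _)%N]addn0 ltn_add2l -has_count.
  by apply/hasP; exists x.
have H2 : (count (fun y => (y < c)%R) u <= count (fun y => (y < c)%R) vals)%N.
  have <- : count (fun y => (y < c)%R) (sort <=%R vals) = count (fun y => (y < c)%R) vals.
    by apply/permP; rewrite perm_sort.
  by rewrite -[X in (_ <= count _ X)%N](cat_take_drop (size vals - f)) count_cat leq_addr.
by move: (leq_trans H1 (leq_trans H2 Hc)); rewrite ltnn.
Qed.

Lemma avg_lb (R : realType) (mid : seq R) r0 c :
  (forall x, x \in mid -> c <= x) -> c <= r0 ->
  c <= (\sum_(x <- mid) x + r0) / ((size mid)%:R + 1).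
Proof.
move=> H H0.
have Hs : (size mid)%:R * c <= \sum_(x <- mid) x.
  elim: mid H => [|y mid IH] H; first by rewrite big_nil mul0r.
  rewrite big_cons /= -[(size mid).+1]addn1 natrD mulrDl mul1r [X in _ <= X]addrC.
  apply: lerD; last by apply: H; rewrite inE eqxx.
  by apply: IH => x Hx; apply: H; rewrite inE Hx orbT.
have hp : 0 < (size mid)%:R + 1 :> R by rewrite ltr_wpDl.
rewrite ler_pdivlMr //; lra.
Qed.

Lemma PL_lb (R : realType) (Omega : Type) (n f : nat) (G : rel 'I_n)
    (F : {set 'I_n}) (Theta : finType) (S : 'I_n -> finType)
    (l : forall i, S i -> Theta -> R) (s : nat -> forall i, Omega -> S i)
    (adv : nat -> 'I_n -> 'I_n -> Theta -> Theta -> Omega -> R)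
    (a b : Theta) (low : nat -> Omega -> R) :
  (#|F| <= f)%N ->
  (forall k t w, low t.+1 w <= cumloglik l s k t.+1 a b w) ->
  forall t j w, j \notin F ->
    \sum_(τ < t) low τ.+1 w <= PL f G F l s adv t j a b w.
Proof.
move=> HF Hlow; elim=> [|t IH] j w jF; first by rewrite big_ord0.
rewrite big_ord_recr /=; apply: lerD; last exact: Hlow.
apply: avg_lb; last exact: IH.
move=> x; apply: trimmed_lb.
rewrite count_map; apply: leq_trans HF.
apply: (@leq_trans (count (mem F) (enum (in_nbrs G j)))).
  apply: sub_count => k /=; case: ifP => // kF.
  by rewrite ltNge IH ?kF.
rewrite -size_filter cardE; apply: uniq_leq_size.
  by rewrite filter_uniq // enum_uniq.
by move=> y; rewrite mem_filter mem_enum => /andP[]; rewrite mem_enum.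
Qed.

Lemma sum_fprod (R : realType) (I : finType) (T_ : I -> finType)
  (P_ : forall i, T_ i -> R) :
  \sum_(t : fprod T_) \prod_(i : I) P_ i (t i) = \prod_(i : I) \sum_(y : T_ i) P_ i y.
Proof.
have := @big_fprod R 0 1 *%R +%R I T_ (fun i => [ffun y => P_ i y]).
move=> H.
transitivity (\sum_(t : fprod T_) \prod_(i in I) [ffun y => P_ i y] (t i)).
  by apply: eq_bigr => t _; apply: eq_bigr => i _; rewrite ffunE.
rewrite H.
apply/esym; under eq_bigr do rewrite (big_tag (fun i (y : T_ i) => P_ i y)).
rewrite bigA_distr_big_dep.
apply: eq_bigr => g _; apply: eq_bigr => i _.
rewrite /untag; case: eqP => // e; by rewrite ffunE.
Qed.

Section Prob.
Variables (R : realType) (n : nat) (Theta : finType) (S : 'I_n -> finType).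
Variables (l : forall i, S i -> Theta -> R) (a b : Theta).
Hypothesis Hl : likelihoods l.

Definition psi {i} (y : S i) := Num.sqrt (l i y b / l i y a).
Definition rho i := \sum_(y : S i) l i y a * psi y.
Local Notation cfg T := {ffun 'I_T -> fprod S}.
Definition pc {T} (c : cfg T) := \prod_(r < T) \prod_(i < n) l i (c r i) a.

Lemma expect T tau k : (tau <= T)%N ->
  \sum_(c : cfg T) pc c * \prod_(r < T | (r < tau)%N) psi (c r k) = rho k ^+ tau.
Proof.
move=> HT.
pose Q (r : 'I_T) (x : fprod S) :=
  \prod_i (l i (x i) a * (if (r < tau)%N && (i == k) then psi (x i) else 1)).
transitivity (\sum_(c : cfg T) \prod_(r < T) Q r (c r)).
  apply: eq_bigr => c _.
  rewrite /pc (big_mkcond (fun r : 'I_T => (r < tau)%N)) -big_split /=.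
  apply: eq_bigr => r _; rewrite /Q big_split /=; congr (_ * _).
  case: (r < tau)%N => /=; last by rewrite big1.
  by rewrite -big_mkcond big_pred1_eq.
rewrite -bigA_distr_bigA /=.
transitivity (\prod_(r < T) (if (r < tau)%N then rho k else 1)).
  apply: eq_bigr => r _; rewrite /Q (@sum_fprod R _ S (fun i y => l i y a * (if (r < tau)%N && (i == k) then psi y else 1))).
  transitivity (\prod_(i < n) (if (r < tau)%N && (i == k) then rho i else 1)).
    apply: eq_bigr => i _; case: ifP => _; first by [].
    by under eq_bigr do rewrite mulr1; case: (Hl i a).
  case: (r < tau)%N => /=; last by rewrite big1.
  by rewrite -big_mkcond big_pred1_eq.
rewrite -big_mkcond /= -(big_ord_widen T (fun _ => rho k) HT).
by rewrite prodr_const card_ord.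
Qed.

Lemma psi_ge0 i (y : S i) : 0 <= psi y.
Proof. exact: sqrtr_ge0. Qed.

Lemma rho_ge0 k : 0 <= rho k.
Proof.
apply: sumr_ge0 => y _; apply: mulr_ge0; last exact: psi_ge0.
by case: (Hl k a) => /(_ y) /ltW.
Qed.

Lemma rho_lt1 k : (exists y, l k y a != l k y b) -> rho k < 1.
Proof.
case=> y0 hy0.
have hx y : 0 < l k y a by case: (Hl k a).
have hz y : 0 < l k y b by case: (Hl k b).
have hu y : (l k y a * psi y) ^+ 2 = l k y a * l k y b.
  rewrite exprMn /psi sqr_sqrtr; last by rewrite divr_ge0 // ltW.
  by field; rewrite gt_eqF.
have hu0 y : 0 <= l k y a * psi y by rewrite mulr_ge0 ?psi_ge0 // ltW.
have hle y : 2 * (l k y a * psi y) <= l k y a + l k y b.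
  have := hu y; have := hu0 y; have := hx y; have := hz y.
  set u := l k y a * psi y; set x := l k y a; set z := l k y b.
  move=> hz' hx' hu0' hu'.
  have hp : 0 < 2 * u + x + z by lra.
  have := sqr_ge0 (x - z); rewrite !expr2 in hu' * => ?; nra.
have hlt : 2 * (l k y0 a * psi y0) < l k y0 a + l k y0 b.
  have hd : 0 < (l k y0 a - l k y0 b) ^+ 2.
    by rewrite lt_neqAle sqr_ge0 andbT eq_sym sqrf_eq0 subr_eq0.
  move: hd (hu y0) (hu0 y0) (hx y0) (hz y0).
  set u := l k y0 a * psi y0; set x := l k y0 a; set z := l k y0 b.
  move=> hd hu' hu0' hx' hz'.
  have hp : 0 < 2 * u + x + z by lra.
  rewrite !expr2 in hu' hd *; nra.
have : 2 * rho k < 2.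
  have h2 : \sum_y (l k y a + l k y b) = 2 :> R.
    by rewrite big_split /=; case: (Hl k a) => _ ->; case: (Hl k b) => _ ->.
  rewrite -[X in _ < X]h2 /rho mulr_sumr (bigD1 y0) //= [X in _ < X](bigD1 y0) //=.
  by apply: ltr_leD => //; apply: ler_sum => y _.
lra.
Qed.

Lemma geom_bound (x : R) T : 0 <= x < 1 ->
  \sum_(tau < T) x ^+ tau.+1 <= (1 - x)^-1.
Proof.
case/andP=> x0 x1.
have e : (1 - x) * \sum_(tau < T) x ^+ tau.+1 = x - x ^+ T.+1.
  elim: T => [|T IH]; first by rewrite big_ord0 expr1 mulr0 subrr.
  by rewrite big_ord_recr /= mulrDr IH !exprS; ring.
have hp : 0 < 1 - x by lra.
rewrite -(ler_pM2l hp) divff ?gt_eqF // e.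
have : 0 <= x ^+ T.+1 by rewrite exprn_ge0.
lra.
Qed.

Variables (Omega : Type) (s : nat -> forall i, Omega -> S i).

Definition Hk k t w := \prod_(r < t) psi (s r.+1 k w).

Lemma Hk_ge0 k t w : 0 <= Hk k t w.
Proof. by apply: prodr_ge0 => r _; exact: psi_ge0. Qed.

Lemma cll_lb k t w : -(2 * Hk k t w) <= cumloglik l s k t a b w.
Proof.
rewrite /cumloglik !big_add1 !big_mkord.
set A := \prod_(r < t) l k (s r.+1 k w) a.
set B := \prod_(r < t) l k (s r.+1 k w) b.
have A0 : 0 < A by apply: prodr_gt0 => r _; case: (Hl k a).
have B0 : 0 < B by apply: prodr_gt0 => r _; case: (Hl k b).
have eH : Hk k t w ^+ 2 = B / A.
  rewrite /Hk -prodrXl /A /B -prodf_div; apply: eq_bigr => r _.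
  by rewrite /psi sqr_sqrtr // divr_ge0 // ltW //; [case: (Hl k b)|case: (Hl k a)].
have H0 : 0 < Hk k t w.
  rewrite lt_neqAle Hk_ge0 andbT; apply/negP => /eqP e.
  by move: eH; rewrite -e expr0n /= => /esym/eqP; rewrite mulf_eq0 invr_eq0 !gt_eqF.
have -> : A / B = (Hk k t w ^+ 2)^-1 by rewrite eH invf_div.
rewrite lnV ?posrE ?exprn_gt0 // lnXn //.
have e1 : 1 + (Hk k t w - 1) = Hk k t w by ring.
have := @le_ln1Dx R (Hk k t w - 1); rewrite e1 => /(_ ltac:(lra)).
rewrite mulr2n; lra.
Qed.

Lemma cll_eq0 k t w : (forall y, l k y a = l k y b) -> cumloglik l s k t a b w = 0.
Proof.
move=> e; rewrite /cumloglik.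
under eq_bigr do rewrite e.
rewrite divff ?ln1 // gt_eqF //; apply: prodr_gt0 => r _; case: (Hl k b) => //.
Qed.
End Prob.
Arguments psi {R n Theta S} l a b {i} y.
Arguments rho {R n Theta S} l a b i.
Arguments pc {R n Theta S} l a {T} c.
Arguments Hk {R n Theta S} l a b {Omega} s k t w.

Section Meas.
Variables (R : realType) (d : measure_display) (Omega : measurableType d).
Variables (P : probability Omega R) (n : nat) (Theta : finType) (S : 'I_n -> finType).
Variables (l : forall i, S i -> Theta -> R) (s : nat -> forall i, Omega -> S i) (a b : Theta).
Hypothesis Hl : likelihoods l.
Hypothesis Hs : signal_model P a l s.

Local Notation cfg T := {ffun 'I_T -> fprod S}.

Definition cyl T (c : cfg T) := [set w | forall (r : 'I_T) (i : 'I_n), s r.+1 i w = c r i].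

Lemma cyl_meas T c : measurable (cyl T c).
Proof.
have -> : cyl T c = \bigcap_(r in [set: 'I_T]) \bigcap_(i in [set: 'I_n])
    [set w | s r.+1 i w = c r i].
  apply/seteqP; split => w /=.
    by move=> H r _ i _; exact: H.
  by move=> H r i; exact: (H r I i I).
apply: fin_bigcap_measurable; first exact: finite_finset.
move=> r _; apply: fin_bigcap_measurable; first exact: finite_finset.
by move=> i _; case: Hs => H _; exact: H.
Qed.

Lemma P_cyl T c : P (cyl T c) = (pc l a c)%:E.
Proof.
case: T c => [|T] c.
  have -> : cyl 0 c = setT by apply/seteqP; split => // w _ [].
  by rewrite probability_setT /pc big_ord0.
pose a' t i := c (inord t.-1) i.
case: Hs => _ /(_ T.+1 a').
have -> : [set w | forall t, (1 <= t <= T.+1)%N -> forall i, s t i w = a' t i] = cyl T.+1 c.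
  apply/seteqP; split => w /= H.
    move=> r i; have := H r.+1 (ltn_ord r) i; by rewrite /a' /= inord_val.
  move=> t /andP[t1 tT] i.
  have ht : t.-1.+1 = t by rewrite prednK.
  have := H (inord t.-1) i; rewrite /a' inordK; last by rewrite ht.
  by rewrite ht.
move=> ->; congr (_%:E).
rewrite /pc big_add1 big_mkord; apply: eq_bigr => r _.
by apply: eq_bigr => i _; rewrite /a' /= inord_val.
Qed.

Definition K : {set 'I_n} := [set k | [exists y, l k y a != l k y b]].
Definition Cst := \sum_(k in K) 2 * (1 - rho l a b k)^-1.
Definition Mb := Cst + 1.
Definition Gw T w := \sum_(tau < T) \sum_(k in K) 2 * Hk l a b s k tau.+1 w.
Definition Gc T (c : cfg T) := \sum_(tau < T) \sum_(k in K)
  2 * \prod_(r < T | (r < tau.+1)%N) psi l a b (c r k).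
Definition sigc T w : cfg T := [ffun r : 'I_T => [fprod i => s r.+1 i w]].
Definition E T := \bigcup_(c in [set c : cfg T | Mb < Gc T c]) cyl T c.

Lemma rhoK k : k \in K -> rho l a b k < 1.
Proof. by rewrite inE => /existsP [y hy]; apply: rho_lt1 => //; exists y. Qed.

Lemma Cst_ge0 : 0 <= Cst.
Proof.
apply: sumr_ge0 => k kK; rewrite mulr_ge0 // invr_ge0 subr_ge0 ltW //.
exact: rhoK.
Qed.

Lemma Gc_sig T w : Gc T (sigc T w) = Gw T w.
Proof.
apply: eq_bigr => tau _; apply: eq_bigr => k _; congr (_ * _).
rewrite /Hk (big_ord_widen T (fun r => psi l a b (s r.+1 k w))) //.
by apply: eq_bigr => r _; rewrite ffunE fprodE.
Qed.

Lemma cyl_sig T c w : cyl T c w -> c = sigc T w.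
Proof.
by move=> H; apply/ffunP => r; apply/fprodP => i; rewrite ffunE fprodE H.
Qed.

Lemma sig_cyl T w : cyl T (sigc T w) w.
Proof. by move=> r i; rewrite ffunE fprodE. Qed.

Lemma E_mem T w : E T w <-> Mb < Gw T w.
Proof.
split.
  by case=> c /= hc /cyl_sig e; rewrite -Gc_sig -e.
by move=> h; exists (sigc T w); [rewrite /= Gc_sig | exact: sig_cyl].
Qed.

Lemma Gw_mono w T T' : (T <= T')%N -> Gw T w <= Gw T' w.
Proof.
move=> hT; have : {homo (fun T => Gw T w) : x y / (x <= y)%N >-> x <= y}.
  apply/nondecreasing_seqP => m; rewrite /Gw big_ord_recr /= lerDl.
  by apply: sumr_ge0 => k _; rewrite mulr_ge0 // Hk_ge0.
by apply.
Qed.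

Lemma E_meas T : measurable (E T).
Proof.
apply: fin_bigcup_measurable; first exact: finite_finset.
by move=> c _; exact: cyl_meas.
Qed.

Lemma P_E T : P (E T) = (\sum_(c : cfg T | Mb < Gc T c) pc l a c)%:E.
Proof.
rewrite /E measure_fin_bigcup; last 3 first.
- exact: finite_finset.
- move=> c1 c2 _ _ [w [h1 h2]]; by rewrite (cyl_sig _ _ _ h1) (cyl_sig _ _ _ h2).
- by move=> c _; exact: cyl_meas.
rewrite -sumEFin.
rewrite -(@bigfs _ _ _ _ (enum [set: cfg T]) (fun c => Mb < Gc T c)); last 2 first.
- exact: enum_uniq.
- by move=> c _; rewrite mem_enum in_setT.
rewrite big_enum_cond /=.
apply: eq_big => [c|c _]; first by rewrite in_setT.
exact: P_cyl.
Qed.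

Lemma Mb_gt0 : 0 < Mb.
Proof. by have := Cst_ge0; rewrite /Mb; lra. Qed.

Lemma E_bound T : (P (E T) <= (Cst / Mb)%:E)%E.
Proof.
rewrite P_E lee_fin.
have Mb0 := Mb_gt0.
have pc0 (c : cfg T) : 0 <= pc l a c.
  by apply: prodr_ge0 => r _; apply: prodr_ge0 => i _; case: (Hl i a) => /(_ (c r i)) /ltW.
have Gc0 (c : cfg T) : 0 <= Gc T c.
  apply: sumr_ge0 => tau _; apply: sumr_ge0 => k _; rewrite mulr_ge0 //.
  by apply: prodr_ge0 => r _; exact: psi_ge0.
apply: (@le_trans _ _ (\sum_(c : cfg T) pc l a c * Gc T c / Mb)).
  apply: (@le_trans _ _ (\sum_(c : cfg T | Mb < Gc T c) pc l a c * Gc T c / Mb)).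
    apply: ler_sum => c hc; rewrite -mulrA -[X in X <= _]mulr1 ler_wpM2l //.
    by rewrite ler_pdivlMr // mul1r ltW.
  rewrite [X in _ <= X](bigID (fun c => Mb < Gc T c)) /= lerDl.
  by apply: sumr_ge0 => c _; rewrite divr_ge0 ?mulr_ge0 // ltW.
rewrite -mulr_suml ler_pM2r ?invr_gt0 //.
have -> : \sum_(c : cfg T) pc l a c * Gc T c =
    \sum_(tau < T) \sum_(k in K) 2 * rho l a b k ^+ tau.+1.
  rewrite /Gc; under eq_bigr do rewrite mulr_sumr; rewrite exchange_big.
  apply: eq_bigr => tau _; under eq_bigr do rewrite mulr_sumr; rewrite exchange_big.
  apply: eq_bigr => k _; under eq_bigr do rewrite mulrCA.
  by rewrite -mulr_sumr (@expect R n Theta S l a b Hl) //.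
rewrite exchange_big; apply: ler_sum => k kK.
rewrite -mulr_sumr ler_wpM2l // geom_bound //.
by rewrite rho_ge0 // rhoK.
Qed.

Lemma exists_good (N : set Omega) : measurable N -> P N = 0%E ->
  exists w, ~ N w /\ forall T, Gw T w <= Mb.
Proof.
move=> mN PN0.
case: (pselect (exists w, ~ N w /\ forall T, Gw T w <= Mb)) => // H.
exfalso.
have sub : [set: Omega] `<=` N `|` \bigcup_T E T.
  move=> w _; case: (pselect (N w)) => [|nw]; [by left|right].
  case: (pselect (exists T, Mb < Gw T w)) => [[T hT]|hno].
    by exists T => //; apply/E_mem.
  exfalso; apply: H; exists w; split => // T.
  by rewrite leNgt; apply/negP => h; apply: hno; exists T.
have hU : measurable (\bigcup_T E T) by apply: bigcupT_measurable => T; exact: E_meas.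
have mono : {homo E : m m' / (m <= m')%N >-> (m <= m')%O}.
  move=> m m' hm; apply/subsetPset => w /E_mem h; apply/E_mem; exact: lt_le_trans h (Gw_mono w m m' hm).
have hPU : (P (\bigcup_T E T) <= (Cst / Mb)%:E)%E.
  have hc := nondecreasing_cvg_mu (mu := P) E_meas hU mono.
  rewrite -(cvg_lim _ hc) //; apply: lime_le; first exact: cvgP hc.
  by apply: nearW => T; exact: E_bound.
have h1 : (P [set: Omega] <= P (N `|` \bigcup_T E T))%E.
  by apply: le_measure => //; rewrite inE //; apply: measurableU.
have h2 := measureU2 P mN hU.
have : (1 <= (Cst / Mb)%:E)%E.
  rewrite -(probability_setT P); apply: (le_trans h1); apply: (le_trans h2).
  by move: PN0 => /= ->; rewrite add0e.
rewrite lee_fin ler_pdivlMr ?Mb_gt0 // mul1r /Mb; lra.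
Qed.
End Meas.



Theorem proposition1 (R : realType) (d : measure_display)
    (Omega : measurableType d) (P : probability Omega R)
    (n f : nat) (G : rel 'I_n) (F : {set 'I_n})
    (Theta : finType) (thstar : Theta) (S : 'I_n -> finType)
    (l : forall i, S i -> Theta -> R) (s : nat -> forall i, Omega -> S i)
    (adv : nat -> 'I_n -> 'I_n -> Theta -> Theta -> Omega -> R)
    (i : 'I_n) (thtilde : Theta) :
  (#|F| <= f)%N ->
  likelihoods l ->
  signal_model P thstar l s ->
  (forall H, reduced_graph f G F H -> exists! Sc, source_component F H Sc) ->
  (forall th, th != thstar -> forall H Sc, reduced_graph f G F H ->
     source_component F H Sc ->
     \sum_(j in Sc) KL (l j ^~ thstar) (l j ^~ th) != 0) ->
  i \notin F ->
  (forall th, th != thtilde ->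
     {ae P, forall w, (fun t => PL f G F l s adv t i thtilde th w) @ \oo --> +oo} /\
     {ae P, forall w, (fun t => PL f G F l s adv t i th thtilde w) @ \oo --> -oo}) ->
  thtilde = thstar.
Proof.
move=> HF Hl Hs _ _ iF Hconv.
case: (eqVneq thtilde thstar) => // hne; exfalso.
have hne' : thstar != thtilde by rewrite eq_sym.
have [_ [N [mN PN0 subN]]] := Hconv thstar hne'.
have [w [nw hG]] := @exists_good R d Omega P n Theta S l s thstar thtilde Hl Hs N mN PN0.
have conv : (fun t => PL f G F l s adv t i thstar thtilde w) @ \oo --> -oo.
  case: (pselect ((fun t => PL f G F l s adv t i thstar thtilde w) @ \oo --> -oo)) => // hno.
  by exfalso; apply: nw; apply: subN.
set KK := K R n Theta S l thstar thtilde.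
pose low t w := - \sum_(k in KK) 2 * Hk l thstar thtilde s k t w.
have Hlow : forall k t w, low t.+1 w <= cumloglik l s k t.+1 thstar thtilde w.
  move=> k t w'; rewrite /low.
  case: (boolP (k \in KK)) => kK.
    apply: le_trans (@cll_lb R n Theta S l thstar thtilde Hl Omega s k t.+1 w').
    rewrite lerN2 (bigD1 k) //= lerDl.
    by apply: sumr_ge0 => k' _; rewrite mulr_ge0 // Hk_ge0.
  rewrite (@cll_eq0 R n Theta S l thstar thtilde Hl) //; last first.
    move=> y; move: kK; rewrite /KK /K inE negb_exists => /forallP /(_ y).
    by rewrite negbK => /eqP.
  rewrite oppr_le0; apply: sumr_ge0 => k' _; apply: mulr_ge0 => //; exact: Hk_ge0.
have lb : forall t0, - Mb R n Theta S l thstar thtilde <= PL f G F l s adv t0 i thstar thtilde w.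
  move=> t0; apply: le_trans (@PL_lb R Omega n f G F Theta S l s adv thstar thtilde low HF Hlow t0 i w iF).
  rewrite /low sumrN lerN2; exact: hG.
have := cvgrNy_lt conv (- Mb R n Theta S l thstar thtilde).
case=> N0 _ hN0; have := hN0 N0 (leqnn N0) => /=.
by rewrite ltNge lb.
Qed.
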